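(* Isomorphisms in $\mathsf{DeV^S}$ are given by structure-preserving bijections. Precisely, for de Vries algebras $(A,S_A)$ and $(B,S_B)$: (i) if $f\colon A\to B$ is a boolean isomorphism with $a\mathrel{S_A}a'\iff f(a)\mathrel{S_B}f(a')$ for all $a,a'\in A$, then the relation $T\colon A\to B$ defined by $a\mathrel{T}b\iff f(a)\mathrel{S_B}b$ is an isomorphism in $\mathsf{DeV^S}$ with inverse $T^\dagger$ (where $b\mathrel{T^\dagger}a\iff\neg a\mathrel{T}\neg b$); (ii) conversely, every isomorphism $T\colon(A,S_A)\to(B,S_B)$ in $\mathsf{DeV^S}$ is of this form for some such boolean isomorphism $f$. In particular, two de Vries algebras are isomorphic in $\mathsf{DeV^S}$ iff there is a boolean isomorphism between them preserving and reflecting the proximities.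
   Context: A de Vries algebra is a pair $(B,S)$ with $B$ a complete boolean algebra and $S\subseteq B\times B$ satisfying (S1) $0\mathrel{S}0$, $1\mathrel{S}1$; (S2) $a,b\mathrel{S}c\Rightarrow(a\vee b)\mathrel{S}c$; (S3) $a\mathrel{S}c,d\Rightarrow a\mathrel{S}(c\wedge d)$; (S4) $a\le b\mathrel{S}c\le d\Rightarrow a\mathrel{S}d$; (S5) $a\mathrel{S}b\Rightarrow a\le b$; (S6) $a\mathrel{S}b\Rightarrow\neg b\mathrel{S}\neg a$; (S7) $a\mathrel{S}b\Rightarrow\exists c\,(a\mathrel{S}c\mathrel{S}b)$; (S8) $a\ne0\Rightarrow\exists b\ne0,\ b\mathrel{S}a$. $\mathsf{DeV^S}$: objects de Vries algebras; morphisms $(A,S_A)\to(B,S_B)$ are relations $T\subseteq A\times B$ satisfying (S1)–(S4) and $T\circ S_A=T=S_B\circ T$; identity on $(A,S_A)$ is $S_A$; composition is relational composition. *)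

(* Defs.v *)
(* boolean algebras are MathComp's complemented distributive
   lattices with top and bottom (ctbDistrLatticeType). *)
From HB Require Import structures.
From mathcomp Require Import all_boot all_order.
Set Implicit Arguments. Unset Strict Implicit. Unset Printing Implicit Defensive.
Import Order.Theory.
Local Open Scope order_scope.

Definition complete_lattice (d : Order.disp_t) (B : ctbDistrLatticeType d) : Prop :=
  forall P : B -> Prop, exists s : B,
    (forall x, P x -> x <= s) /\ (forall u, (forall x, P x -> x <= u) -> s <= u).

Definition rel_eqv (X Y : Type) (R R' : X -> Y -> Prop) : Prop :=
  forall x y, R x y <-> R' x y.

(* Diagrammatic composition: [rcomp R R'] is the relational composite R' o R. *)
Definition rcomp (X Y Z : Type) (R : X -> Y -> Prop) (R' : Y -> Z -> Prop)
  : X -> Z -> Prop := fun x z => exists y, R x y /\ R' y z.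

Definition S1to4 (dA dB : Order.disp_t) (A : ctbDistrLatticeType dA)
  (B : ctbDistrLatticeType dB) (T : A -> B -> Prop) : Prop :=
  [/\ T \bot \bot /\ T \top \top,
      (forall a b c, T a c -> T b c -> T (a `|` b) c),
      (forall a c e, T a c -> T a e -> T a (c `&` e)) &
      (forall a b c e, a <= b -> T b c -> c <= e -> T a e)].

Definition deVries (d : Order.disp_t) (B : ctbDistrLatticeType d)
  (S : B -> B -> Prop) : Prop :=
  complete_lattice B /\
  S1to4 S /\
  (forall a b, S a b -> a <= b) /\
  (forall a b, S a b -> S (~` b) (~` a)) /\
  (forall a b, S a b -> exists c, S a c /\ S c b) /\
  (forall a, a != \bot -> exists b, b != \bot /\ S b a).

Definition deV_morphism (dA dB : Order.disp_t) (A : ctbDistrLatticeType dA)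
  (B : ctbDistrLatticeType dB) (SA : A -> A -> Prop) (SB : B -> B -> Prop)
  (T : A -> B -> Prop) : Prop :=
  [/\ S1to4 T, rel_eqv (rcomp SA T) T & rel_eqv (rcomp T SB) T].

(* Isomorphisms of DeV^S (identity on (A,SA) is SA, composition relational). *)
Definition deV_iso (dA dB : Order.disp_t) (A : ctbDistrLatticeType dA)
  (B : ctbDistrLatticeType dB) (SA : A -> A -> Prop) (SB : B -> B -> Prop)
  (T : A -> B -> Prop) : Prop :=
  deV_morphism SA SB T /\
  exists T' : B -> A -> Prop, [/\ deV_morphism SB SA T',
      rel_eqv (rcomp T T') SA & rel_eqv (rcomp T' T) SB].

Definition dagger (dA dB : Order.disp_t) (A : ctbDistrLatticeType dA)
  (B : ctbDistrLatticeType dB) (T : A -> B -> Prop) : B -> A -> Prop :=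
  fun b a => T (~` a) (~` b).

Definition bool_iso (dA dB : Order.disp_t) (A : ctbDistrLatticeType dA)
  (B : ctbDistrLatticeType dB) (f : A -> B) : Prop :=
  bijective f /\ f \bot = \bot /\ f \top = \top /\
  (forall a a', f (a `&` a') = f a `&` f a') /\
  (forall a a', f (a `|` a') = f a `|` f a') /\
  (forall a, f (~` a) = ~` f a).

Definition prox_preserving (dA dB : Order.disp_t) (A : ctbDistrLatticeType dA)
  (B : ctbDistrLatticeType dB) (SA : A -> A -> Prop) (SB : B -> B -> Prop)
  (f : A -> B) : Prop :=
  forall a a', SA a a' <-> SB (f a) (f a').

(* Main.v *)
Require Import Defs.
From HB Require Import structures.
From mathcomp Require Import all_boot all_order.
From Stdlib Require Import ClassicalEpsilon FunctionalExtensionality PropExtensionality.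

Module Aux.
Set Implicit Arguments. Unset Strict Implicit.
Import Order.Theory.
Local Open Scope order_scope.

Section Rel.
Context {dA dB : Order.disp_t} {A : ctbDistrLatticeType dA}
  {B : ctbDistrLatticeType dB} {T : A -> B -> Prop} (hT : S1to4 T).
Lemma T_bot : T \bot \bot. Proof. by case: hT => [[]]. Qed.
Lemma T_top : T \top \top. Proof. by case: hT => [[]]. Qed.
Lemma T_join a b c : T a c -> T b c -> T (a `|` b) c. Proof. by case: hT => _ h _ _; apply: h. Qed.
Lemma T_meet a c e : T a c -> T a e -> T a (c `&` e). Proof. by case: hT => _ _ h _; apply: h. Qed.
Lemma T_mono a b c e : a <= b -> T b c -> c <= e -> T a e.
Proof. by case: hT => _ _ _ h; apply: h. Qed.
End Rel.

Section Prox.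
Context {d : Order.disp_t} {B : ctbDistrLatticeType d} {S : B -> B -> Prop} (hS : deVries S).
Lemma S_14 : S1to4 S. Proof. by case: hS => _ [h _]. Qed.
Lemma S_le x y : S x y -> x <= y. Proof. move=> hxy; case: hS => _ [_ [h _]]; exact: h hxy. Qed.
Lemma S_mono x y z w : x <= y -> S y z -> z <= w -> S x w.
Proof. move=> h1 h2 h3; exact: (T_mono S_14 h1 h2 h3). Qed.
Lemma S_trans x y z : S x y -> S y z -> S x z.
Proof. move=> h1 h2; exact: (S_mono (lexx x) h1 (S_le h2)). Qed.
Lemma S6 x y : S x y -> S (~` y) (~` x). Proof. move=> hxy; case: hS => _ [_ [_ [h _]]]; exact: h hxy. Qed.
Lemma S_neg x y : S (~` y) (~` x) <-> S x y.
Proof. split; last exact: S6. by move/S6; rewrite !complK. Qed.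
Lemma S_negK x y : S x (~` y) -> S y (~` x).
Proof. by move/S6; rewrite complK. Qed.
Lemma S_interp x y : S x y -> exists c, S x c /\ S c y.
Proof. move=> hxy; case: hS => _ [_ [_ [_ [h _]]]]; exact: h hxy. Qed.
Lemma S_nonbot a : a != \bot -> exists b, b != \bot /\ S b a.
Proof. move=> hxy; case: hS => _ [_ [_ [_ [_ h]]]]; exact: h hxy. Qed.
Lemma S_lite a c : (forall e, S e (a `&` ~` c) -> e = \bot) -> a <= c.
Proof.
move=> H. rewrite -[c]complK -disj_leC. apply/negPn/negP => hne.
have [e [en he]] := S_nonbot hne. by move: en; rewrite (H e he) eqxx.
Qed.
Lemma S_reg a c : (forall e, S e a -> e <= c) -> a <= c.
Proof.
move=> H; apply: S_lite => e he.
have h1 : e <= c := H e (S_mono (lexx e) he (leIl _ _)).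
have h2 : e <= ~` c := le_trans (S_le he) (leIr _ _).
by apply/eqP; rewrite -lex0 -(meetxC c) lexI h1 h2.
Qed.
End Prox.

Record IsoPair {dA dB : Order.disp_t} {A : ctbDistrLatticeType dA}
  {B : ctbDistrLatticeType dB} (SA : A -> A -> Prop) (SB : B -> B -> Prop)
  (T : A -> B -> Prop) (T' : B -> A -> Prop) : Prop := MkIso {
  iA : deVries SA; iB : deVries SB; imT : deV_morphism SA SB T;
  imT' : deV_morphism SB SA T'; iI1 : rel_eqv (rcomp T T') SA;
  iI2 : rel_eqv (rcomp T' T) SB }.

Lemma IsoPair_sym {dA dB : Order.disp_t} {A : ctbDistrLatticeType dA}
  {B : ctbDistrLatticeType dB} (SA : A -> A -> Prop) (SB : B -> B -> Prop)
  (T : A -> B -> Prop) (T' : B -> A -> Prop) :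
  IsoPair SA SB T T' -> IsoPair SB SA T' T.
Proof. by case=> *; split. Qed.

Section Iso1.
Context {dA dB : Order.disp_t} {A : ctbDistrLatticeType dA}
  {B : ctbDistrLatticeType dB} {SA : A -> A -> Prop} {SB : B -> B -> Prop}
  {T : A -> B -> Prop} {T' : B -> A -> Prop} (P : IsoPair SA SB T T').
Lemma PA : deVries SA. Proof. exact: iA P. Qed.
Lemma PB : deVries SB. Proof. exact: iB P. Qed.
Lemma PT : S1to4 T. Proof. by case: (imT P). Qed.
Lemma PT' : S1to4 T'. Proof. by case: (imT' P). Qed.
Lemma PTa : rel_eqv (rcomp SA T) T. Proof. by case: (imT P). Qed.
Lemma PTb : rel_eqv (rcomp T SB) T. Proof. by case: (imT P). Qed.
Lemma PT'b : rel_eqv (rcomp T' SA) T'. Proof. by case: (imT' P). Qed.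
Lemma PI1 : rel_eqv (rcomp T T') SA. Proof. exact: iI1 P. Qed.
Lemma PI2 : rel_eqv (rcomp T' T) SB. Proof. exact: iI2 P. Qed.

Lemma L0 a : T a \bot -> a = \bot.
Proof.
move=> h; apply/eqP; rewrite -lex0; apply: (S_le PA); apply/(PI1 a \bot).
by exists \bot; split=> //; exact: (T_bot PT').
Qed.
End Iso1.

Section Iso2.
Context {dA dB : Order.disp_t} {A : ctbDistrLatticeType dA}
  {B : ctbDistrLatticeType dB} {SA : A -> A -> Prop} {SB : B -> B -> Prop}
  {T : A -> B -> Prop} {T' : B -> A -> Prop} (P : IsoPair SA SB T T').

Lemma Tdag b a : T' b a -> T (~` a) (~` b).
Proof.
move=> h.
have [a0 [h1 h2]] := (PT'b P b a).2 h.
have h3 : SA (~` a) (~` a0) := (S_neg (PA P) _ _).2 h2.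
have [y [hy1 hy2]] := (PI1 P _ _).2 h3.
have h4 : T' (b `&` y) \bot.
  rewrite -(meetxC a0). apply: (T_meet (PT' P)).
    by apply: (T_mono (PT' P) _ h1 (lexx _)); exact: leIl.
  by apply: (T_mono (PT' P) _ hy2 (lexx _)); exact: leIr.
have h5 := L0 (IsoPair_sym P) h4.
apply: (T_mono (PT P) (lexx _) hy1).
by rewrite -disj_leC meetC h5.
Qed.

Definition hf (a : A) : B :=
  proj1_sig (constructive_indefinite_description _ ((proj1 (PB P)) (fun z => T' z a))).

Lemma hf_spec a : (forall z, T' z a -> z <= hf a) /\
  (forall u, (forall z, T' z a -> z <= u) -> hf a <= u).
Proof. rewrite /hf; by case: constructive_indefinite_description. Qed.

Lemma hub z a : T' z a -> z <= hf a. Proof. exact: (proj1 (hf_spec a)). Qed.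

Lemma F2 a b : T a b -> hf a <= b.
Proof.
move=> h; apply: (proj2 (hf_spec a)) => z hz.
apply: (S_le (PB P)); apply/(PI2 P); by exists a.
Qed.

Lemma F4 a1 a : SA a1 a -> T a1 (hf a).
Proof.
move=> h; have [b [h1 h2]] := (PI1 P _ _).2 h.
exact: (T_mono (PT P) (lexx _) h1 (hub h2)).
Qed.

Lemma Sep c x a1 : (forall b, T c b -> x <= b) -> T a1 x -> a1 <= c.
Proof.
move=> Hx h1; apply: (S_lite (PA P)) => e he.
have e1 : T e x := T_mono (PT P) (le_trans (S_le (PA P) he) (leIl _ _)) h1 (lexx _).
have e2 : SA e (~` c) := S_mono (PA P) (lexx e) he (leIr _ _).
have e3 : SA c (~` e) := S_negK (PA P) e2.
have [b [hb1 hb2]] := (PI1 P _ _).2 e3.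
have e4 : T e (~` b) by have := Tdag hb2; rewrite complK.
apply: (L0 P). rewrite -(meetxC b).
apply: (T_mono (PT P) (lexx e) (T_meet (PT P) e1 e4)).
rewrite lexI leIr andbT; exact: (le_trans (leIl _ _) (Hx _ hb1)).
Qed.

Lemma F3 a1 a : T a1 (hf a) -> a1 <= a.
Proof. exact: Sep (@F2 a). Qed.

Lemma F5 a a'' : T' (hf a) a'' -> a <= a''.
Proof.
move=> h; apply: (S_reg (PA P)) => e he.
apply: (@Sep a'' (hf a)) (F4 he) => b hb.
apply: (S_le (PB P)); apply/(PI2 P); by exists a''.
Qed.

Lemma crux a b : T a b <-> SB (hf a) b.
Proof.
split.
- move=> h; have [y [h1 h2]] := (PTb P a b).2 h.
  exact: (S_mono (PB P) (F2 h1) h2 (lexx b)).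
- move=> h; have [a' [h1 h2]] := (PI2 P _ _).2 h.
  have [a'' [h3 h4]] := (PT'b P _ _).2 h1.
  apply/(PTa P); exists a'; split=> //.
  exact: (S_mono (PA P) (F5 h3) h4 (lexx _)).
Qed.

Lemma prox a a' : SA a a' <-> SB (hf a) (hf a').
Proof.
split.
- move=> h; have [b [h1 h2]] := (PI1 P _ _).2 h.
  exact: (S_mono (PB P) (lexx _) ((crux _ _).1 h1) (hub h2)).
- move=> h; have := (crux a (hf a')).2 h.
  move/(PTa P _ _) => [a1 [h1 h2]].
  exact: (S_mono (PA P) (lexx _) h1 (F3 h2)).
Qed.

Lemma mono a a' : a <= a' -> hf a <= hf a'.
Proof.
move=> h; apply: (proj2 (hf_spec a)) => z hz; apply: hub.
exact: (T_mono (PT' P) (lexx _) hz h).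
Qed.
End Iso2.

Lemma hf_eq {dA dB : Order.disp_t} {A : ctbDistrLatticeType dA}
  {B : ctbDistrLatticeType dB} {SA : A -> A -> Prop} {SB : B -> B -> Prop}
  {T : A -> B -> Prop} {T' : B -> A -> Prop} (P P' : IsoPair SA SB T T') a :
  hf P a = hf P' a.
Proof.
apply/le_anti/andP; split; apply: (proj2 (hf_spec _ a)) => z hz; exact: hub.
Qed.

Lemma fg {dA dB : Order.disp_t} {A : ctbDistrLatticeType dA}
  {B : ctbDistrLatticeType dB} {SA : A -> A -> Prop} {SB : B -> B -> Prop}
  {T : A -> B -> Prop} {T' : B -> A -> Prop} (P : IsoPair SA SB T T') b :
  hf P (hf (IsoPair_sym P) b) = b.
Proof.
set g := hf (IsoPair_sym P).
apply/le_anti/andP; split.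
- apply: (S_reg (PB P)) => e he. have [a [h1 h2]] := (PI2 P _ _).2 he.
  have h3 : SA (g e) a := (crux (IsoPair_sym P) _ _).1 h1.
  have h4 : SA a (g b) := (prox P _ _).2 ((crux P _ _).1 h2).
  apply: (S_le (PB P)). apply/(prox (IsoPair_sym P)). exact: (S_trans (PA P) h3 h4).
- apply: (S_reg (PB P)) => e he. have [a [h1 h2]] := (PI2 P _ _).2 he.
  apply: (le_trans (hub P h1)). apply: mono.
  exact: (hub (IsoPair_sym P) h2).
Qed.

Lemma order_iso_bool {dA dB : Order.disp_t} {A : ctbDistrLatticeType dA}
  {B : ctbDistrLatticeType dB} (f : A -> B) (g : B -> A) :
  cancel f g -> cancel g f -> {homo f : x y / x <= y} -> {homo g : x y / x <= y} ->
  bool_iso f.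
Proof.
move=> fK gK mf mg.
have fbot : f \bot = \bot.
  by apply/eqP; rewrite -lex0; have := mf _ _ (le0x (g \bot)); rewrite gK.
have ftop : f \top = \top.
  by apply/eqP; rewrite -le1x; have := mf _ _ (lex1 (g \top)); rewrite gK.
have fI a a' : f (a `&` a') = f a `&` f a'.
  apply/le_anti/andP; split.
    by rewrite lexI !mf ?leIl ?leIr.
  rewrite -[X in X <= _]gK; apply: mf; rewrite lexI.
  have := mg _ _ (leIl (f a) (f a')); have := mg _ _ (leIr (f a') (f a)).
  by rewrite !fK meetC => -> ->.
have fU a a' : f (a `|` a') = f a `|` f a'.
  apply/le_anti/andP; split; last by rewrite leUx !mf ?leUl ?leUr.
  rewrite -[X in _ <= X]gK; apply: mf; rewrite leUx.
  have := mg _ _ (leUl (f a) (f a')); have := mg _ _ (leUr (f a') (f a)).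
  by rewrite !fK joinC => -> ->.
split; first by exists g.
do 4!(split=> //).
move=> a; apply/le_anti/andP; split.
  by rewrite -disj_leC -fI meetCx fbot.
by rewrite -[f (~` a)]complK -disj_leC -complU -fU joinxC ftop compl1.
Qed.

Section PartI.
Context {dA dB : Order.disp_t} {A : ctbDistrLatticeType dA}
  {B : ctbDistrLatticeType dB} {SA : A -> A -> Prop} {SB : B -> B -> Prop}
  (hA : deVries SA) (hB : deVries SB) (f : A -> B) (bf : bool_iso f)
  (pf : prox_preserving SA SB f).

Lemma f_mono : {homo f : x y / x <= y}.
Proof.
move=> x y h; case: bf => _ [_ [_ [fI _]]].
by rewrite -(meet_idPl h) fI leIr.
Qed.

Lemma morph_of : deV_morphism SA SB (fun a b => SB (f a) b).
Proof.
case: bf => [[g fK gK] [f0 [f1 [fI [fU fC]]]]].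
split.
- split.
  + by rewrite f0 f1; split; [exact: (T_bot (S_14 hB)) | exact: (T_top (S_14 hB))].
  + by move=> a b c h1 h2; rewrite fU; exact: (T_join (S_14 hB) h1 h2).
  + by move=> a c e h1 h2; exact: (T_meet (S_14 hB) h1 h2).
  + by move=> a b c e h1 h2 h3; exact: (S_mono hB (f_mono h1) h2 h3).
- move=> a b; split.
  + by move=> [a' [h1 h2]]; exact: (S_trans hB ((pf _ _).1 h1) h2).
  + move=> h; have [c [h1 h2]] := S_interp hB h.
    exists (g c); split; first by apply/(pf a (g c)); rewrite gK.
    by rewrite gK.
- move=> a b; split.
  + by move=> [y [h1 h2]]; exact: (S_trans hB h1 h2).
  + by move=> h; have [c [h1 h2]] := S_interp hB h; exists c.
Qed.
End PartI.

Lemma inv_iso {dA dB : Order.disp_t} {A : ctbDistrLatticeType dA}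
  {B : ctbDistrLatticeType dB} (SA : A -> A -> Prop) (SB : B -> B -> Prop)
  (f : A -> B) (g : B -> A) :
  bool_iso f -> prox_preserving SA SB f -> cancel f g -> cancel g f ->
  bool_iso g /\ prox_preserving SB SA g.
Proof.
move=> bf pf fK gK; split.
- apply: (order_iso_bool gK fK); last exact: f_mono.
  move=> x y h. rewrite -(fK (g x)) -(fK (g y)) gK gK.
  by rewrite -(meet_idPl h); case: bf => _ [_ [_ [fI _]]]; rewrite -{1}[x]gK -{1}[y]gK -fI fK leIr.
- by move=> b b'; rewrite (pf (g b) (g b')) !gK.
Qed.

End Aux.
Import Aux.

Theorem theorem5p4 (dA dB : Order.disp_t) (A : ctbDistrLatticeType dA)
  (B : ctbDistrLatticeType dB) (SA : A -> A -> Prop) (SB : B -> B -> Prop) :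
  deVries SA -> deVries SB ->
  [/\ (* (i) *)
      (forall f : A -> B, bool_iso f -> prox_preserving SA SB f ->
         let T := fun (a : A) (b : B) => SB (f a) b in
         [/\ deV_morphism SA SB T, deV_morphism SB SA (dagger T),
             rel_eqv (rcomp T (dagger T)) SA & rel_eqv (rcomp (dagger T) T) SB]),
      (* (ii) *)
      (forall T : A -> B -> Prop, deV_iso SA SB T ->
         exists f : A -> B, [/\ bool_iso f, prox_preserving SA SB f &
                                forall a b, T a b <-> SB (f a) b]) &
      (* in particular *)
      ((exists T : A -> B -> Prop, deV_iso SA SB T) <->
       (exists f : A -> B, bool_iso f /\ prox_preserving SA SB f))].
Proof.
move=> hA hB.
have partI : forall f : A -> B, bool_iso f -> prox_preserving SA SB f ->
         let T := fun (a : A) (b : B) => SB (f a) b in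
         [/\ deV_morphism SA SB T, deV_morphism SB SA (dagger T),
             rel_eqv (rcomp T (dagger T)) SA & rel_eqv (rcomp (dagger T) T) SB].
  move=> f bf pf T.
  have bf' := bf.
  case: bf' => [[g fK gK] [f0 [f1 [fI [fU fC]]]]].
  have [bg pg] := inv_iso bf pf fK gK.
  have dT1 : dagger T = (fun b a => SB b (f a)).
    apply: functional_extensionality => b; apply: functional_extensionality => a.
    apply: propositional_extensionality.
    by rewrite /dagger /T fC; exact: (S_neg hB).
  have dT2 : (fun b a => SB b (f a)) = (fun b a => SA (g b) a).
    apply: functional_extensionality => b; apply: functional_extensionality => a.
    apply: propositional_extensionality.
    by have := pg b (f a); rewrite fK.
  split.
  - exact: morph_of.
  - by rewrite dT1 dT2; exact: morph_of.
  - rewrite dT1 => a a'; split.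
    + by move=> [b [h1 h2]]; apply/(pf a a'); exact: (S_trans hB h1 h2).
    + move=> h; have [c [h1 h2]] := S_interp hB ((pf a a').1 h).
      by exists c.
  - rewrite dT1 => b b'; split.
    + by move=> [a [h1 h2]]; exact: (S_trans hB h1 h2).
    + move=> h; have [c [h1 h2]] := S_interp hB h.
      by exists (g c); rewrite /T gK.
have partII : forall T : A -> B -> Prop, deV_iso SA SB T ->
         exists f : A -> B, [/\ bool_iso f, prox_preserving SA SB f &
                                forall a b, T a b <-> SB (f a) b].
  move=> T [mT [T' [mT' I1 I2]]].
  have P : IsoPair SA SB T T' := MkIso hA hB mT mT' I1 I2.
  exists (hf P); split.
  - apply: (@order_iso_bool _ _ _ _ (hf P) (hf (IsoPair_sym P))).
    + move=> a; have := fg (IsoPair_sym P) a.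
      by rewrite (hf_eq (IsoPair_sym (IsoPair_sym P)) P).
    + exact: fg.
    + move=> x y; exact: mono.
    + move=> x y; exact: mono.
  - move=> a a'; exact: prox.
  - move=> a b; exact: crux.
split=> //; split.
- by move=> [T hT]; have [f [bf pf _]] := partII T hT; exists f.
- move=> [f [bf pf]]; have [m1 m2 e1 e2] := partI f bf pf.
  exists (fun a b => SB (f a) b); split=> //.
  by exists (dagger (fun a b => SB (f a) b)); split.
Qed.
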